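(* Let $\varepsilon>0$, let $a,b\in\mathbb{R}^d$ with $a\ne b$, and let $P_{ab}$ be a polygonal $ab$-path with $\|P_{ab}\|\le(1+\varepsilon)\|ab\|$. For $\alpha\in[0,\pi/2]$ let $E(\alpha)$ be the set of edges $e$ of $P_{ab}$ with $\angle(ab,e)<\alpha$. Then for every integer $i$ with $1\le i\le\lfloor(\pi/2)/\sqrt{\varepsilon}\rfloor$ we have $\|E(i\sqrt{\varepsilon})\|\ge(1-2/i^2)\,\|ab\|$, where $\|E(\alpha)\|$ denotes the total length of the edges in $E(\alpha)$.
   Context: For undirected segments $e_1,e_2$ with unit direction vectors $\pm\vec u_1,\pm\vec u_2$, $\angle(e_1,e_2)=\arccos|\vec u_1\cdot\vec u_2|\in[0,\pi/2]$. *)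

(* Defs.v *)
From HB Require Import structures.
From mathcomp Require Import all_boot all_order all_algebra.
From mathcomp Require Import all_classical all_reals all_analysis.
Set Implicit Arguments. Unset Strict Implicit. Unset Printing Implicit Defensive.
Import Order.TTheory GRing.Theory Num.Theory.
Local Open Scope ring_scope.

Definition edot {R : realType} {d : nat} (u v : 'rV[R]_d) : R :=
  \sum_(i < d) u 0 i * v 0 i.
Definition enorm {R : realType} {d : nat} (u : 'rV[R]_d) : R :=
  Num.sqrt (edot u u).

(* Angle between the undirected segments pq and rs:
   arccos |u1 . u2| for the unit directions u1, u2. *)
Definition seg_angle {R : realType} {d : nat} (p q r s : 'rV[R]_d) : R :=
  acos (`| edot ((enorm (q - p))^-1 *: (q - p)) ((enorm (s - r))^-1 *: (s - r)) |).

(* A polygonal path with k edges and vertices P 0, ..., P k;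
   edge j (j < k) is the segment P j P (j+1). *)
Definition path_length {R : realType} {d : nat} (k : nat) (P : nat -> 'rV[R]_d) : R :=
  \sum_(j < k) enorm (P j.+1 - P j).

Definition E_length {R : realType} {d : nat} (a b : 'rV[R]_d) (k : nat)
    (P : nat -> 'rV[R]_d) (alpha : R) : R :=
  \sum_(j < k | seg_angle a b (P j) (P j.+1) < alpha) enorm (P j.+1 - P j).

(* Main.v *)
Require Import Defs.
From HB Require Import structures.
From mathcomp Require Import all_boot all_order all_algebra.
From mathcomp Require Import all_classical all_reals all_analysis.
From mathcomp Require Import ring lra zify.
Import Order.TTheory GRing.Theory Num.Theory.
Import numFieldNormedType.Exports.
Local Open Scope ring_scope.

Section Aux.
Variable R : realType.
Variable d : nat.
Implicit Types x y u e : 'rV[R]_d.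

Lemma coef'E (x : R) n : cos_coeff' x n = (-1)^+n * x ^+ n.*2 / n.*2`!%:R.
Proof. by rewrite /cos_coeff' -exprnP. Qed.

Lemma cos_ub (x : R) : 0 < x <= 2 -> cos x < 1 - x^+2/2 + x^+4/24.
Proof.
move=> /andP[x0 x2].
have /cvgN h := @cvg_cos_coeff' R x.
rewrite -(opprK (cos _)) -(cvg_lim (@Rhausdorff R) h).
rewrite ltrNl.
have -> : - (1 - x ^+ 2 / 2 + x ^+ 4 / 24) = \sum_(0 <= i < 3) - cos_coeff' x i.
  rewrite !big_nat_recl // big_nil !coef'E /=.
  rewrite !expr0 !expr1 !mul1r.
  have -> : (2`! = 2)%N by [].
  have -> : (4`! = 24)%N by [].
  have -> : (0`! = 1)%N by [].
  rewrite (_ : 1.*2 = 2)%N // (_ : 2.*2 = 4)%N // invr1 sqrrN expr1n.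
  ring.
rewrite -seriesN lt_sum_lim_series //.
  by move/cvgP in h; rewrite seriesN.
move=> d'; rewrite !coef'E.
set m := (3 + d'.*2)%N.
have e1 : (-1)^+m = -1 :> R by rewrite -signr_odd /m oddD odd_double.
have -> : (3 + d'.*2.+1)%N = m.+1 by rewrite /m addnS.
have e2 : (-1)^+m.+1 = 1 :> R by rewrite exprS e1 mulrNN mulr1.
have m3 : (3 <= m)%N by rewrite /m leq_addr.
clearbody m.
rewrite e1 e2 doubleS factS factS !natrM exprS exprS mulN1r mul1r mulNr opprK.
set y := x ^+ m.*2.
set F := (m.*2)`!%:R.
have y0 : 0 < y by rewrite exprn_gt0.
have F0 : 0 < F by rewrite ltr0n fact_gt0.
have N56 : 56 <= (m.*2.+2)%:R * (m.*2.+1)%:R :> R.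
  rewrite -natrM ler_nat; nia.
set N := _ * _ in N56.
have -> : (m.*2.+2)%:R * ((m.*2.+1)%:R * F) = N * F by rewrite /N mulrA.
have xx : x * x <= 4 by nra.
have -> : y / F - x * (x * y) / (N * F) = (y / F) * (1 - x * x / N).
  by field; apply/andP; split; apply: lt0r_neq0 => //; lra.
apply: mulr_gt0; first by apply: divr_gt0.
rewrite subr_gt0 ltr_pdivrMr; lra.
Qed.

Lemma edotBl x y u : edot (x - y) u = edot x u - edot y u.
Proof.
rewrite /edot -sumrB; apply: eq_bigr => j _; rewrite !mxE; ring.
Qed.

Lemma edotZl (c : R) x y : edot (c *: x) y = c * edot x y.
Proof. rewrite /edot mulr_sumr; apply: eq_bigr => j _; rewrite !mxE; ring. Qed.

Lemma edotZr (c : R) x y : edot x (c *: y) = c * edot x y.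
Proof. rewrite /edot mulr_sumr; apply: eq_bigr => j _; rewrite !mxE; ring. Qed.

Lemma edotC x y : edot x y = edot y x.
Proof. rewrite /edot; apply: eq_bigr => j _; ring. Qed.

Lemma edot0l u : edot 0 u = 0.
Proof. by rewrite /edot big1 // => j _; rewrite mxE mul0r. Qed.

Lemma edot_ge0 x : 0 <= edot x x.
Proof. by rewrite /edot sumr_ge0 // => j _; rewrite -expr2 sqr_ge0. Qed.

Lemma dot0 x : edot x x = 0 -> x = 0.
Proof.
rewrite /edot => h; apply/matrixP => i j; rewrite ord1 mxE.
have nn : forall k : 'I_d, true -> 0 <= x 0 k * x 0 k.
  by move=> *; rewrite -expr2 sqr_ge0.
have := psumr_eq0P nn h (i:=j) isT; move=> /eqP; rewrite mulf_eq0 orbb => /eqP //.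
Qed.

Lemma edot_abs_le x y : `|edot x y| <= (edot x x + edot y y) / 2.
Proof.
rewrite /edot; apply: le_trans (ler_norm_sum _ _ _) _.
rewrite -big_split mulr_suml; apply: ler_sum => j _ /=.
move: (real_normK (num_real (x 0 j))) (real_normK (num_real (y 0 j))) => hp hq.
have := sqr_ge0 (`|x 0 j| - `|y 0 j|).
rewrite normrM; nra.
Qed.

Lemma enorm_sq e : enorm e ^+ 2 = edot e e.
Proof. by rewrite /enorm sqr_sqrtr // edot_ge0. Qed.

Lemma enorm0 e : enorm e = 0 -> e = 0.
Proof.
move=> h; apply: dot0; apply/le_anti; rewrite edot_ge0 andbT.
by rewrite -sqrtr_eq0; apply/eqP.
Qed.

Lemma enorm_ge0 e : 0 <= enorm e.
Proof. exact: sqrtr_ge0. Qed.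

Lemma unit_dot e : enorm e != 0 ->
  edot ((enorm e)^-1 *: e) ((enorm e)^-1 *: e) = 1.
Proof.
move=> h; rewrite edotZl edotZr -enorm_sq; field; exact: h.
Qed.

Lemma escale e : e = enorm e *: ((enorm e)^-1 *: e) \/ enorm e = 0.
Proof.
case: (eqVneq (enorm e) 0) => h; [by right|left].
by rewrite scalerA divff // scale1r.
Qed.

Lemma dot_le_norm u e : edot u u = 1 -> edot e u <= enorm e.
Proof.
move=> uu; case: (eqVneq (enorm e) 0) => h.
  by rewrite h (enorm0 _ h) edot0l.
have := escale e; case=> [He|]; last by move/eqP; rewrite (negbTE h).
rewrite He edotZl.
have l0 : 0 < enorm e by rewrite lt_def h enorm_ge0.
set v := _ *: e.
have vv : edot v v = 1 by exact: unit_dot.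
have := edot_abs_le v u; rewrite vv uu => hv.
have : edot v u <= 1 by apply: le_trans (ler_norm _) _; lra.
have -> : enorm (enorm e *: v) = enorm e by rewrite -He.
move=> h1; nra.
Qed.

Lemma nonE u e (al : R) : 0 < al <= pi -> edot u u = 1 ->
  ~~ (acos `|edot u ((enorm e)^-1 *: e)| < al) ->
  edot e u <= enorm e * cos al.
Proof.
move=> /andP[a0 api] uu hn; case: (eqVneq (enorm e) 0) => h.
  by rewrite h (enorm0 _ h) edot0l mul0r.
have l0 : 0 < enorm e by rewrite lt_def h enorm_ge0.
have := escale e; case=> [He|]; last by move/eqP; rewrite (negbTE h).
move: hn; rewrite -leNgt.
set v := _ *: e => hn.
have vv : edot v v = 1 by exact: unit_dot.
set c := `|edot u v|.
have c1 : c <= 1 by have := edot_abs_le u v; rewrite vv uu /c; lra.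
have c0 : 0 <= c by exact: normr_ge0.
have Hc : c \in `[(-1), 1] by rewrite in_itv /=; apply/andP; split => //; lra.
have cc : c <= cos al.
  rewrite leNgt; apply/negP => H.
  have Ha : al \in `[0, pi] by rewrite in_itv /=; apply/andP; split => //; lra.
  have Hac : acos c \in `[0, pi].
    rewrite in_itv /=; apply/andP; split.
      by apply: acos_ge0; apply/andP; split => //; lra.
    by apply: acos_lepi; apply/andP; split => //; lra.
  move: H; rewrite -(acosK Hc) (ltr_cos Hac Ha) => H.
  by move: (lt_le_trans H hn); rewrite ltxx.
rewrite He edotZl -He edotC.
have : edot u v <= c by exact: ler_norm.
nra.
Qed.

Lemma tele (P : nat -> 'rV[R]_d) u n :
  \sum_(j < n) edot (P j.+1 - P j) u = edot (P n) u - edot (P 0%N) u.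
Proof.
elim: n => [|n IH]; first by rewrite big_ord0 subrr.
by rewrite big_ord_recr /= IH edotBl; ring.
Qed.

End Aux.

Theorem lemma2 (R : realType) (d : nat) (eps : R) (a b : 'rV[R]_d)
    (k : nat) (P : nat -> 'rV[R]_d) :
  0 < eps -> a != b ->
  P 0%N = a -> P k = b ->
  path_length k P <= (1 + eps) * enorm (b - a) ->
  forall i : nat, (1 <= i)%N ->
    (i%:Z <= Num.floor ((pi / 2) / Num.sqrt eps))%R ->
    E_length a b k P (i%:R * Num.sqrt eps) >= (1 - 2 / (i%:R ^+ 2)) * enorm (b - a).
Proof.
move=> eps0 ab Pa Pb Hlen i i1 Hfl.
set w := b - a.
set L := enorm w.
have ww0 : 0 < edot w w.
  rewrite lt_def edot_ge0 andbT; apply/eqP => /dot0 /eqP.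
  by rewrite /w subr_eq0 eq_sym (negbTE ab).
have L0 : 0 < L by rewrite /L /enorm sqrtr_gt0.
have LL : L ^+ 2 = edot w w by rewrite /L enorm_sq.
set u := L^-1 *: w.
have uu : edot u u = 1.
  rewrite /u edotZl edotZr -LL; field; exact: lt0r_neq0.
have wu : edot w u = L.
  rewrite /u edotZr -LL; field; exact: lt0r_neq0.
set s := Num.sqrt eps.
have s0 : 0 < s by rewrite /s sqrtr_gt0.
have ss : s ^+ 2 = eps by rewrite /s sqr_sqrtr // ltW.
set t : R := i%:R.
have t1 : 1 <= t by rewrite /t ler1n.
set al := t * s.
have al0 : 0 < al by rewrite /al mulr_gt0 // (lt_le_trans ltr01 t1).
have alpi : al <= pi / 2.
  have := floor_le ((pi / 2) / s).
  move: Hfl; rewrite -(ler_int R) => Hfl Hf.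
  have : t <= pi / 2 / s by apply: le_trans Hf; rewrite /t -[i%:R]/((i%:Z)%:~R).
  by rewrite ler_pdivlMr // -/al.
have pi2 := pihalf_lt2 R.
have pi0 := pi_gt0 R.
set c := cos al.
have c0 : 0 <= c.
  apply: cos_ge0_pihalf; apply/andP; split => //; lra.
have cub : c < 1 - al^+2/2 + al^+4/24 by apply: cos_ub; apply/andP; split => //; lra.
have Hsum : \sum_(j < k) edot (P j.+1 - P j) u = L.
  by rewrite tele Pa Pb -edotBl wu.
set p := fun j : 'I_k => seg_angle a b (P j) (P j.+1) < al.
have HE : \sum_(j < k | p j) edot (P j.+1 - P j) u <= E_length a b k P al.
  by apply: ler_sum => j _; apply: dot_le_norm.
set S' := \sum_(j < k | ~~ p j) enorm (P j.+1 - P j).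
have HN : \sum_(j < k | ~~ p j) edot (P j.+1 - P j) u <= c * S'.
  rewrite /S' mulr_sumr; apply: ler_sum => j hj; rewrite mulrC.
  apply: nonE => //; apply/andP; split => //; lra.
have HT : path_length k P = E_length a b k P al + S'.
  by rewrite /path_length (bigID p) /=.
move: Hsum; rewrite (bigID p) /= => Hsum.
set E := E_length a b k P al in HE HT *.
rewrite -/L in Hlen.
have H1 : L <= E + c * S' by lra.
set A := al ^+ 2.
have A0 : 0 < A by rewrite /A exprn_gt0.
have A4 : A <= 4 by rewrite /A; nra.
have e4 : al ^+ 4 = A * A by rewrite /A -exprD.
rewrite e4 in cub.
have K : c * (A + 2) <= 2.
  have h1 : (c - (1 - A / 2 + A * A / 24)) * (A + 2) <= 0.
    by apply: mulr_le0_ge0; [rewrite subr_le0; exact: ltW | lra].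
  have h2 : A * A * (A - 10) <= 0.
    by apply: mulr_ge0_le0; [apply: mulr_ge0; lra | lra].
  nra.
have c1 : c < 1 by nra.
have epsA : eps * t ^+ 2 = A by rewrite /A /al exprMn -ss mulrC.
have H2 : c * (eps * t ^+ 2) * L <= 2 * (1 - c) * L.
  rewrite epsA; apply: ler_wpM2r; [exact: ltW | lra].
have H3 : L - c * ((1 + eps) * L) <= (1 - c) * E.
  have : c * path_length k P <= c * ((1 + eps) * L) by apply: ler_wpM2l.
  rewrite HT; nra.
have t2 : 0 < t ^+ 2 by rewrite exprn_gt0 // (lt_le_trans ltr01 t1).
have H4 : t ^+ 2 * (L - c * ((1 + eps) * L)) <= t ^+ 2 * ((1 - c) * E).
  by apply: ler_wpM2l => //; exact: ltW.
have G : ((1 - c) * t ^+ 2) * ((1 - 2 / t ^+ 2) * L) <= ((1 - c) * t ^+ 2) * E.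
  have -> : ((1 - c) * t ^+ 2) * ((1 - 2 / t ^+ 2) * L) =
            t ^+ 2 * (1 - c) * L - 2 * (1 - c) * L.
    by field; exact: (lt0r_neq0 (lt_le_trans ltr01 t1)).
  have e5 : t ^+ 2 * (L - c * ((1 + eps) * L)) =
            t ^+ 2 * (1 - c) * L - c * (eps * t ^+ 2) * L by ring.
  rewrite e5 in H4.
  lra.
rewrite ler_pM2l in G => //.
by apply: mulr_gt0; lra.
Qed.
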